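(* Let $(\mathcal{C},\otimes,I,c)$ be a strict braided monoidal category and let $V,W$ be objects of $\mathcal{C}$ such that the internal homs $\hom(V,I)$ and $\hom(W,I)$ exist. Then $$\mathrm{ev}_{V,I}\circ(\mathrm{id}_{\hom(V,I)}\otimes\mathrm{ev}_{W,I}\otimes\mathrm{id}_V)=\mathrm{ev}_{W,I}\circ(\mathrm{id}_{\hom(W,I)}\otimes\mathrm{ev}_{V,I}\otimes\mathrm{id}_W)\circ\big((c_{\hom(W,I),\hom(V,I)})^{-1}\otimes c_{W,V}\big)$$ as morphisms $\hom(V,I)\otimes\hom(W,I)\otimes W\otimes V\to I$.
   Context: For objects $U,Y$, an internal hom $\hom(U,Y)$ is an object together with a natural isomorphism $\Theta_{X,U,Y}:\operatorname{Hom}_{\mathcal{C}}(X\otimes U,Y)\to\operatorname{Hom}_{\mathcal{C}}(X,\hom(U,Y))$ (natural in $X$). The evaluation morphism is $\mathrm{ev}_{U,Y}=\Theta^{-1}_{\hom(U,Y),U,Y}(\mathrm{id}_{\hom(U,Y)}):\hom(U,Y)\otimes U\to Y$. *)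

(* Defs.v *)
(* Transport of a morphism along equalities of its source and target objects.
   Needed because strictness makes e.g. (A ⊗ B) ⊗ C and A ⊗ (B ⊗ C) equal
   objects only propositionally. *)
Definition castH {O : Type} (H : O -> O -> Type) {A A' B B' : O}
  (eA : A = A') (eB : B = B') (f : H A B) : H A' B' :=
  match eA in _ = A0, eB in _ = B0 return H A0 B0 with
  | eq_refl, eq_refl => f
  end.

Record SBMC := {
  ob : Type;
  hom : ob -> ob -> Type;
  idm : forall A, hom A A;
  comp : forall A B C, hom B C -> hom A B -> hom A C;
  comp_idl : forall A B (f : hom A B), comp A B B (idm B) f = f;
  comp_idr : forall A B (f : hom A B), comp A A B f (idm A) = f;
  comp_assoc : forall A B C D (f : hom A B) (g : hom B C) (h : hom C D),
    comp A C D h (comp A B C g f) = comp A B D (comp B C D h g) f;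
  tens : ob -> ob -> ob;
  tensm : forall A B C D, hom A B -> hom C D -> hom (tens A C) (tens B D);
  tensm_id : forall A B, tensm A A B B (idm A) (idm B) = idm (tens A B);
  tensm_comp : forall A B C A' B' C' (f : hom A B) (g : hom B C)
      (f' : hom A' B') (g' : hom B' C'),
    tensm A C A' C' (comp A B C g f) (comp A' B' C' g' f')
    = comp _ _ _ (tensm B C B' C' g g') (tensm A B A' B' f f');
  unit : ob;
  tens_assoc : forall A B C, tens (tens A B) C = tens A (tens B C);
  tens_unitl : forall A, tens unit A = A;
  tens_unitr : forall A, tens A unit = A;
  tensm_assoc : forall A B C A' B' C' (f : hom A A') (g : hom B B') (h : hom C C'),
    castH hom (tens_assoc A B C) (tens_assoc A' B' C')
      (tensm _ _ _ _ (tensm _ _ _ _ f g) h)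
    = tensm _ _ _ _ f (tensm _ _ _ _ g h);
  tensm_unitl : forall A B (f : hom A B),
    castH hom (tens_unitl A) (tens_unitl B) (tensm _ _ _ _ (idm unit) f) = f;
  tensm_unitr : forall A B (f : hom A B),
    castH hom (tens_unitr A) (tens_unitr B) (tensm _ _ _ _ f (idm unit)) = f;
  braid : forall A B, hom (tens A B) (tens B A);
  braid_inv : forall A B, hom (tens B A) (tens A B);
  braid_invl : forall A B, comp _ _ _ (braid_inv A B) (braid A B) = idm (tens A B);
  braid_invr : forall A B, comp _ _ _ (braid A B) (braid_inv A B) = idm (tens B A);
  braid_nat : forall A A' B B' (f : hom A A') (g : hom B B'),
    comp _ _ _ (braid A' B') (tensm _ _ _ _ f g)
    = comp _ _ _ (tensm _ _ _ _ g f) (braid A B);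
  hexagon1 : forall A B C,
    braid A (tens B C)
    = comp _ _ _
        (castH hom eq_refl (eq_sym (tens_assoc B C A))
           (tensm _ _ _ _ (idm B) (braid A C)))
        (castH hom (tens_assoc A B C) (tens_assoc B A C)
           (tensm _ _ _ _ (braid A B) (idm C)));
  hexagon2 : forall A B C,
    braid (tens A B) C
    = comp _ _ _
        (castH hom eq_refl (tens_assoc C A B)
           (tensm _ _ _ _ (braid A C) (idm B)))
        (castH hom (eq_sym (tens_assoc A B C)) (eq_sym (tens_assoc A C B))
           (tensm _ _ _ _ (idm A) (braid B C)))
}.

Arguments hom {s} _ _.
Arguments idm {s} _.
Arguments comp {s A B C} _ _.
Arguments tens {s} _ _.
Arguments tensm {s A B C D} _ _.
Arguments unit {s}.
Arguments tens_assoc {s} _ _ _.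
Arguments tens_unitl {s} _.
Arguments tens_unitr {s} _.
Arguments braid {s} _ _.
Arguments braid_inv {s} _ _.

Record IHom (C : SBMC) (U Y : ob C) := {
  ihom : ob C;
  theta : forall X, hom (tens X U) Y -> hom X ihom;
  theta_inv : forall X, hom X ihom -> hom (tens X U) Y;
  theta_invK : forall X f, theta_inv X (theta X f) = f;
  theta_K : forall X g, theta X (theta_inv X g) = g;
  theta_nat : forall X X' (g : hom X X') (f : hom (tens X' U) Y),
    theta X (comp f (tensm g (idm U))) = comp (theta X' f) g
}.

Arguments ihom {C U Y} _.
Arguments theta {C U Y} _ _ _.
Arguments theta_inv {C U Y} _ _ _.

Definition ev {C : SBMC} {U Y : ob C} (H : IHom C U Y) : hom (tens (ihom H) U) Y :=
  theta_inv H (ihom H) (idm (ihom H)).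

(* Main.v *)
Require Import Defs.
From Stdlib Require Import ClassicalEpsilon ProofIrrelevance.

Record M (C : SBMC) := mk { dm : ob C; cd : ob C; mr : hom dm cd }.
Arguments mk {C dm cd} _.
Arguments dm {C} _. Arguments cd {C} _. Arguments mr {C} _.

Definition compM {C} (G F : M C) : M C :=
  match excluded_middle_informative (cd F = dm G) with
  | left e => mk (comp (mr G) (castH hom eq_refl e (mr F)))
  | right _ => F end.

Definition tensM {C} (F G : M C) : M C := mk (tensm (mr F) (mr G)).
Definition idM {C} (A : ob C) : M C := mk (idm A).
Definition braidM {C} (A B : ob C) : M C := mk (braid A B).
Definition binvM {C} (A B : ob C) : M C := mk (braid_inv A B).

Lemma mk_cast {C : SBMC} (A A' B B' : ob C) (eA : A = A') (eB : B = B') (f : hom A B) :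
  mk (castH hom eA eB f) = mk f.
Proof. destruct eA, eB; reflexivity. Qed.

Lemma mk_inj_gen {C : SBMC} (m m' : M C) (H : m = m') :
  castH hom (f_equal dm H) (f_equal cd H) (mr m) = mr m'.
Proof. destruct H; reflexivity. Qed.

Lemma mk_inj {C : SBMC} (A B : ob C) (f g : hom A B) : mk f = mk g -> f = g.
Proof.
  intro H. pose proof (mk_inj_gen _ _ H) as K. simpl in K.
  rewrite (proof_irrelevance _ (f_equal dm H) eq_refl) in K.
  rewrite (proof_irrelevance _ (f_equal cd H) eq_refl) in K.
  exact K.
Qed.

Lemma compM_mk {C : SBMC} (A B D : ob C) (f : hom A B) (g : hom B D) :
  compM (mk g) (mk f) = mk (comp g f).
Proof.
  unfold compM; simpl. destruct (excluded_middle_informative (B = B)) as [e|n].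
  - rewrite (proof_irrelevance _ e eq_refl); reflexivity.
  - exfalso; apply n; reflexivity.
Qed.

Global Opaque compM.

Lemma mk_tensm {C : SBMC} (A B D E : ob C) (f : hom A B) (g : hom D E) :
  mk (tensm f g) = tensM (mk f) (mk g).
Proof. reflexivity. Qed.
Lemma mk_idm {C : SBMC} (A : ob C) : mk (idm A) = idM A.
Proof. reflexivity. Qed.
Lemma mk_braid {C : SBMC} (A B : ob C) : mk (braid A B) = braidM A B.
Proof. reflexivity. Qed.
Lemma mk_binv {C : SBMC} (A B : ob C) : mk (braid_inv A B) = binvM A B.
Proof. reflexivity. Qed.

Lemma dm_compM {C : SBMC} (F G : M C) : cd F = dm G -> dm (compM G F) = dm F.
Proof. destruct F, G; simpl; intro; subst; rewrite compM_mk; reflexivity. Qed.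
Lemma cd_compM {C : SBMC} (F G : M C) : cd F = dm G -> cd (compM G F) = cd G.
Proof. destruct F, G; simpl; intro; subst; rewrite compM_mk; reflexivity. Qed.

Ltac obj := repeat (simpl; first [reflexivity | rewrite dm_compM by obj | rewrite cd_compM by obj
  | rewrite !tens_assoc | rewrite !tens_unitl | rewrite !tens_unitr
  | match goal with H : dm _ = _ |- _ => rewrite !H | H : cd _ = _ |- _ => rewrite !H end ]).

Lemma compM_assoc {C : SBMC} (E F G : M C) : cd E = dm F -> cd F = dm G ->
  compM G (compM F E) = compM (compM G F) E.
Proof.
  destruct E, F, G; simpl; intros H1 H2; subst.
  rewrite !compM_mk, comp_assoc; reflexivity.
Qed.

Lemma compM_idl {C : SBMC} (F : M C) X : X = cd F -> compM (idM X) F = F.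
Proof. destruct F; simpl; intro; subst; unfold idM; rewrite compM_mk, comp_idl; reflexivity. Qed.
Lemma compM_idr {C : SBMC} (F : M C) X : X = dm F -> compM F (idM X) = F.
Proof. destruct F; simpl; intro; subst; unfold idM; rewrite compM_mk, comp_idr; reflexivity. Qed.

Lemma tensM_comp {C : SBMC} (F G F' G' : M C) : cd F = dm G -> cd F' = dm G' ->
  tensM (compM G F) (compM G' F') = compM (tensM G G') (tensM F F').
Proof.
  destruct F, G, F', G'; simpl; intros H1 H2; subst.
  rewrite !compM_mk. unfold tensM; simpl. rewrite compM_mk, tensm_comp; reflexivity.
Qed.

Lemma tensM_id {C : SBMC} (A B : ob C) : tensM (idM A) (idM B) = idM (tens A B).
Proof. unfold tensM, idM; simpl; rewrite tensm_id; reflexivity. Qed.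

Lemma tensM_assoc {C : SBMC} (F G H : M C) : tensM (tensM F G) H = tensM F (tensM G H).
Proof.
  destruct F, G, H; unfold tensM; simpl. rewrite <- tensm_assoc. rewrite mk_cast. reflexivity.
Qed.

Lemma tensM_unitl {C : SBMC} (F : M C) : tensM (idM unit) F = F.
Proof.
  destruct F as [A B f]; unfold tensM, idM; simpl.
  transitivity (mk (castH hom (tens_unitl A) (tens_unitl B) (tensm (idm unit) f))).
  - symmetry; apply mk_cast.
  - rewrite tensm_unitl; reflexivity.
Qed.
Lemma tensM_unitr {C : SBMC} (F : M C) : tensM F (idM unit) = F.
Proof.
  destruct F as [A B f]; unfold tensM, idM; simpl.
  transitivity (mk (castH hom (tens_unitr A) (tens_unitr B) (tensm f (idm unit)))).
  - symmetry; apply mk_cast.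
  - rewrite tensm_unitr; reflexivity.
Qed.

Lemma braid_natM {C : SBMC} (F G : M C) :
  compM (braidM (cd F) (cd G)) (tensM F G) = compM (tensM G F) (braidM (dm F) (dm G)).
Proof. destruct F, G; unfold tensM, braidM; simpl; rewrite !compM_mk, braid_nat; reflexivity. Qed.

Lemma braid_invlM {C : SBMC} (A B : ob C) : compM (binvM A B) (braidM A B) = idM (tens A B).
Proof. unfold binvM, braidM; rewrite compM_mk, braid_invl; reflexivity. Qed.
Lemma braid_invrM {C : SBMC} (A B : ob C) : compM (braidM A B) (binvM A B) = idM (tens B A).
Proof. unfold binvM, braidM; rewrite compM_mk, braid_invr; reflexivity. Qed.

Lemma hex1M {C : SBMC} (A B D : ob C) :
  braidM A (tens B D) = compM (tensM (idM B) (braidM A D)) (tensM (braidM A B) (idM D)).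
Proof.
  unfold braidM at 1. rewrite hexagon1, <- compM_mk, !mk_cast. reflexivity.
Qed.
Lemma hex2M {C : SBMC} (A B D : ob C) :
  braidM (tens A B) D = compM (tensM (braidM A D) (idM B)) (tensM (idM A) (braidM B D)).
Proof.
  unfold braidM at 1. rewrite hexagon2, <- compM_mk, !mk_cast. reflexivity.
Qed.

Lemma braidM_unitr {C : SBMC} (A : ob C) : braidM A unit = idM A.
Proof.
  set (c := braidM A unit).
  assert (Hcc : c = compM c c).
  { pose proof (hex1M A unit unit) as K.
    rewrite tensM_unitl, tensM_unitr, (tens_unitl unit) in K. exact K. }
  assert (Hi : compM (binvM A unit) c = idM A).
  { unfold c; rewrite braid_invlM, tens_unitr; reflexivity. }
  rewrite <- Hi. transitivity (compM (compM (binvM A unit) c) c).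
  - rewrite Hi. rewrite compM_idl by (unfold c; obj). reflexivity.
  - rewrite <- compM_assoc by (unfold c; obj). rewrite <- Hcc. reflexivity.
Qed.

Lemma braidM_unitl {C : SBMC} (A : ob C) : braidM unit A = idM A.
Proof.
  set (c := braidM unit A).
  assert (Hcc : c = compM c c).
  { pose proof (hex2M unit unit A) as K.
    rewrite tensM_unitl, tensM_unitr, (tens_unitl unit) in K. exact K. }
  assert (Hi : compM (binvM unit A) c = idM A).
  { unfold c; rewrite braid_invlM, tens_unitl; reflexivity. }
  rewrite <- Hi. transitivity (compM (compM (binvM unit A) c) c).
  - rewrite Hi. rewrite compM_idl by (unfold c; obj). reflexivity.
  - rewrite <- compM_assoc by (unfold c; obj). rewrite <- Hcc. reflexivity.
Qed.

Lemma natL {C : SBMC} (F : M C) (Y : ob C) : cd F = unit ->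
  tensM F (idM Y) = compM (tensM (idM Y) F) (braidM (dm F) Y).
Proof.
  intro H. pose proof (braid_natM F (idM Y)) as K. simpl in K.
  rewrite H, braidM_unitl in K. rewrite compM_idl in K by (unfold tensM; simpl; rewrite H; obj).
  exact K.
Qed.

Lemma natR {C : SBMC} (F : M C) (Y : ob C) : cd F = unit ->
  tensM (idM Y) F = compM (tensM F (idM Y)) (braidM Y (dm F)).
Proof.
  intro H. pose proof (braid_natM (idM Y) F) as K. simpl in K.
  rewrite H, braidM_unitr in K. rewrite compM_idl in K by (unfold tensM; simpl; rewrite H; obj).
  exact K.
Qed.

Lemma whisk {C : SBMC} (X : ob C) (F G : M C) : cd F = dm G ->
  tensM (idM X) (compM G F) = compM (tensM (idM X) G) (tensM (idM X) F).
Proof.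
  intro H. rewrite <- tensM_comp by (simpl; auto).
  rewrite compM_idl by reflexivity. reflexivity.
Qed.

Lemma key {C : SBMC} (a b v : ob C) (F : M C) : dm F = tens a v -> cd F = unit ->
  compM (tensM F (idM b)) (tensM (idM a) (braidM b v))
  = compM (tensM (idM b) F) (tensM (binvM b a) (idM v)).
Proof.
  intros Hd Hc.
  set (L := compM (tensM F (idM b)) (tensM (idM a) (braidM b v))).
  assert (Hid : compM (tensM (braidM b a) (idM v)) (tensM (binvM b a) (idM v))
                = idM (tens a (tens b v))).
  { rewrite <- tensM_comp by reflexivity. rewrite braid_invrM, compM_idl by reflexivity.
    rewrite tensM_id, tens_assoc. reflexivity. }
  transitivity (compM L (idM (tens a (tens b v)))).
  { rewrite compM_idr; [reflexivity|]. unfold L. rewrite dm_compM; simpl; [reflexivity|].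
    rewrite Hd; obj. }
  rewrite <- Hid. unfold L.
  rewrite compM_assoc by obj.
  rewrite <- (compM_assoc (tensM (braidM b a) (idM v))) by obj.
  rewrite <- hex1M.
  rewrite <- Hd. rewrite <- natR by exact Hc. reflexivity.
Qed.

Lemma whiskR {C : SBMC} (X : ob C) (F G : M C) : cd F = dm G ->
  tensM (compM G F) (idM X) = compM (tensM G (idM X)) (tensM F (idM X)).
Proof.
  intro H. rewrite <- tensM_comp by (simpl; auto).
  rewrite compM_idl by reflexivity. reflexivity.
Qed.

Lemma swap {C : SBMC} (a b v w : ob C) (EV EW : M C) :
  dm EV = tens a v -> cd EV = unit -> dm EW = tens b w -> cd EW = unit ->
  compM EV (tensM (idM a) (tensM (idM v) EW)) = compM EW (tensM (tensM EV (idM b)) (idM w)).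
Proof.
  intros dEV cEV dEW cEW.
  rewrite <- tensM_assoc, tensM_id, tensM_assoc, tensM_id.
  transitivity (tensM EV EW).
  - rewrite <- (tensM_unitr EV) at 1.
    rewrite <- tensM_comp by obj.
    rewrite compM_idr by obj. rewrite compM_idl by obj. reflexivity.
  - rewrite <- (tensM_unitl EW) at 2.
    rewrite <- tensM_comp by obj.
    rewrite compM_idr by obj. rewrite compM_idl by obj. reflexivity.
Qed.

Lemma mainM {C : SBMC} (a b v w : ob C) (EV EW : M C) :
  dm EV = tens a v -> cd EV = unit -> dm EW = tens b w -> cd EW = unit ->
  compM EV (tensM (idM a) (tensM EW (idM v)))
  = compM EW (compM (tensM (idM b) (tensM EV (idM w))) (tensM (binvM b a) (braidM w v))).
Proof.
  intros dEV cEV dEW cEW.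
  set (R2 := tensM (idM a) (tensM (idM b) (braidM w v))).
  transitivity (compM EW (compM (tensM (compM (tensM (idM b) EV) (tensM (binvM b a) (idM v))) (idM w)) R2)).
  - rewrite (natL EW v cEW), dEW, hex2M.
    rewrite whisk by obj. rewrite whisk by obj.
    fold R2.
    rewrite (compM_assoc _ _ EV) by obj.
    rewrite (swap a b v w EV EW) by assumption.
    rewrite <- (compM_assoc (compM (tensM (idM a) (tensM (braidM b v) (idM w))) R2) (tensM (tensM EV (idM b)) (idM w)) EW) by obj.
    rewrite (compM_assoc R2 (tensM (idM a) (tensM (braidM b v) (idM w))) (tensM (tensM EV (idM b)) (idM w))) by obj.
    rewrite <- key by assumption.
    rewrite whiskR by obj.
    rewrite !tensM_assoc. reflexivity.
  - rewrite whiskR by obj.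
    rewrite <- compM_assoc by obj.
    rewrite tensM_assoc.
    f_equal. f_equal.
    unfold R2.
    rewrite tensM_assoc, tensM_id.
    rewrite <- (tensM_assoc (idM a)), tensM_id.
    rewrite <- tensM_comp by obj.
    rewrite compM_idl by obj. rewrite compM_idr by obj. reflexivity.
Qed.

Theorem lemma3p23 (C : SBMC) (V W : ob C)
    (HV : IHom C V unit) (HW : IHom C W unit) :
  comp (ev HV)
    (castH hom (f_equal (tens (ihom HV)) (tens_assoc (ihom HW) W V))
               (f_equal (tens (ihom HV)) (tens_unitl V))
       (tensm (idm (ihom HV)) (tensm (ev HW) (idm V))))
  =
  castH hom (tens_assoc (ihom HV) (ihom HW) (tens W V)) eq_refl
    (comp (ev HW)
      (comp
        (castH hom
           (eq_trans (f_equal (tens (ihom HW)) (tens_assoc (ihom HV) V W))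
                     (eq_sym (tens_assoc (ihom HW) (ihom HV) (tens V W))))
           (f_equal (tens (ihom HW)) (tens_unitl W))
           (tensm (idm (ihom HW)) (tensm (ev HV) (idm W))))
        (tensm (braid_inv (ihom HW) (ihom HV)) (braid W V)))).
Proof.
  apply mk_inj.
  repeat first [rewrite mk_cast | rewrite <- compM_mk | rewrite mk_tensm | rewrite mk_idm
               | rewrite mk_braid | rewrite mk_binv].
  exact (mainM (ihom HV) (ihom HW) V W (mk (ev HV)) (mk (ev HW)) eq_refl eq_refl eq_refl eq_refl).
Qed.
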